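(* Let $f:S^1\to S^1$ be a Denjoy homeomorphism with Cantor set $\Gamma$ and arc $J_0$ as described in the context, let $\Delta$ be the partition of $S^1$ into $f$-orbits, $Y=S^1/\Delta$ with the quotient topology, $p:S^1\to Y$ the projection, $Q=p(\Gamma)$ and $J=p(S^1\setminus\Gamma)$. Then: (a) if $U\subset S^1$ is open and $U\cap\Gamma\neq\varnothing$, then $U$ meets every $f$-orbit, i.e. $p^{-1}(p(U))=S^1$; (b) every open $V\subset Y$ with $V\cap Q\neq\varnothing$ equals $Y$; (c) every subset $L\subset Y$ with $L\cap Q\neq\varnothing$ is compact; (d) if $k:Y\to Y$ is continuous and $k(y)\in J$ for some $y\in Q$, then $k$ is constant (with value $k(y)$).
   Context: A Denjoy homeomorphism here is an orientation preserving homeomorphism $f:S^1\to S^1$ with irrational rotation number such that (i) there is a nowhere dense Cantor set $\Gamma\subset S^1$ with $f(\Gamma)=\Gamma$ and the orbit $\{f^k(x):k\in\mathbb{Z}\}$ of every $x\in\Gamma$ is dense in $\Gamma$; (ii) there is an open arc $J_0\subset S^1$ such that $S^1\setminus\Gamma=\bigsqcup_{m\in\mathbb{Z}} f^m(J_0)$ (disjoint union). Write $J_m=f^m(J_0)$. *)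

(* Defs.v *)
From HB Require Import structures.
From mathcomp Require Import all_boot all_order all_algebra.
From mathcomp Require Import all_classical all_reals all_analysis.
Set Implicit Arguments. Unset Strict Implicit. Unset Printing Implicit Defensive.
Import Order.TTheory GRing.Theory Num.Theory numFieldNormedType.Exports.
Local Open Scope classical_set_scope.
Local Open Scope ring_scope.
Local Open Scope quotient_scope.

Section Circle.
Variable R : realType.

Definition circ_rel (x y : R) : bool := (x - y) \is a Num.int.

Lemma circ_rel_refl : reflexive circ_rel.
Proof. by move=> x; rewrite /circ_rel subrr. Qed.

Lemma circ_rel_sym : symmetric circ_rel.
Proof. by move=> x y; rewrite /circ_rel -opprB rpredN. Qed.

Lemma circ_rel_trans : transitive circ_rel.
Proof.
move=> y x z; rewrite /circ_rel => hxy hyz.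
have -> : x - z = (x - y) + (y - z) by rewrite addrA subrK.
by rewrite rpredD.
Qed.

Definition circ_equiv := EquivRel circ_rel circ_rel_refl circ_rel_sym circ_rel_trans.

Definition S1 : Type := quotient_topology {eq_quot circ_equiv}.
Definition piS : R -> S1 := \pi_S1.
End Circle.
Arguments piS {R}.

Section Orbits.
Context {T : topologicalType}.

(* x ~ y iff f^m x = f^n y for some m n : nat.  For a bijection f this is
   exactly "y = f^k x for some k : int", i.e. x and y lie in the same f-orbit. *)
Definition orbit_rel (f : T -> T) (x y : T) : bool :=
  `[< exists m n : nat, iter m f x = iter n f y >].

Lemma orbit_rel_refl f : reflexive (orbit_rel f).
Proof. by move=> x; apply/asboolP; exists 0%N, 0%N. Qed.

Lemma orbit_rel_sym f : symmetric (orbit_rel f).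
Proof.
move=> x y; apply/asboolP/asboolP => -[m [n h]]; by exists n, m.
Qed.

Lemma orbit_rel_trans f : transitive (orbit_rel f).
Proof.
move=> y x z /asboolP [m [n h1]] /asboolP [m' [n' h2]]; apply/asboolP.
exists (m + m')%N, (n + n')%N.
by rewrite addnC iterD h1 -iterD addnC iterD h2 -iterD.
Qed.

Definition orbit_equiv f :=
  EquivRel (orbit_rel f) (orbit_rel_refl f) (@orbit_rel_sym f) (@orbit_rel_trans f).

Definition orbit_space (f : T -> T) : Type :=
  quotient_topology {eq_quot orbit_equiv f}.
Definition orbit_proj (f : T -> T) : T -> orbit_space f := \pi_(orbit_space f).

Definition zit (f g : T -> T) (m : int) : T -> T :=
  match m with Posz n => iter n f | Negz n => iter n.+1 g end.

Definition zorbit (f g : T -> T) (x : T) : set T := range (fun k : int => zit f g k x).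

Definition homeomorphism (f g : T -> T) :=
  [/\ continuous f, continuous g, cancel f g & cancel g f].

Definition cantor_subset (A : set T) :=
  [/\ A !=set0, compact A, perfect_set A & totally_disconnected A].

Definition nowhere_dense (A : set T) := (closure A)° = set0.
End Orbits.

Section Denjoy.
Variable R : realType.
Local Notation S1 := (S1 R).

(* F : R -> R is a lift of f which is an increasing homeomorphism of R
   commuting with x |-> x+1 (this expresses that f is orientation preserving) *)
Definition increasing_lift (f : S1 -> S1) (F : R -> R) :=
  [/\ continuous F, {homo F : x y / x < y},
      (forall x, F (x + 1) = F x + 1) & (forall x, f (piS x) = piS (F x))].

Definition rotation_number_of (F : R -> R) (rho : R) :=
  (fun n : nat => (iter n F 0 - 0) / n%:R) @ \oo --> rho.

Definition irrational (rho : R) := forall q : rat, rho != ratr q.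

Definition open_arc (J : set S1) :=
  exists a b : R, a < b < a + 1 /\ J = piS @` `]a, b[.

Definition Denjoy (f : S1 -> S1) (Gamma J0 : set S1) :=
  exists g : S1 -> S1,
  [/\ homeomorphism f g,
      (exists F rho, [/\ increasing_lift f F, rotation_number_of F rho & irrational rho]),
      [/\ cantor_subset Gamma, nowhere_dense Gamma, f @` Gamma = Gamma
        & forall x, Gamma x -> Gamma `<=` closure (zorbit f g x)] &
      [/\ open_arc J0,
          ~` Gamma = \bigcup_(m in [set: int]) (zit f g m @` J0)
        & forall m n : int, m != n -> (zit f g m @` J0) `&` (zit f g n @` J0) = set0]].
End Denjoy.

(* Main.v *)
Require Import Defs.
From HB Require Import structures.
From mathcomp Require Import all_boot all_order all_algebra.
From mathcomp Require Import all_classical all_reals all_analysis.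
From mathcomp Require Import lra.
Import Order.TTheory GRing.Theory Num.Theory numFieldNormedType.Exports.
Local Open Scope classical_set_scope.
Local Open Scope ring_scope.
Local Open Scope quotient_scope.

Lemma projE {T : topologicalType} (f : T -> T) x y :
  orbit_proj f x = orbit_proj f y <-> orbit_rel f x y.
Proof.
have H := @eqmodP _ (orbit_equiv f) x y.
by split => h; apply/H.
Qed.

Lemma piSE (R : realType) (x y : R) : piS x = piS y <-> (x - y) \is a Num.int.
Proof.
have H := @eqmodP _ (circ_equiv R) x y.
by split => h; apply/H.
Qed.

Section Zit.
Context {T : topologicalType} {f g : T -> T} (fK : cancel f g) (gK : cancel g f).

Lemma iter_cK {h k : T -> T} n : cancel h k -> cancel (iter n h) (iter n k).
Proof.
move=> hk; elim: n => [//|n IH] x.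
by rewrite iterSr iterS hk IH.
Qed.

Lemma zitP m x : g (zit f g m x) = zit f g (m - 1) x.
Proof.
case: m => [[|n]|n].
- by have -> : (Posz 0 - 1 : int) = Negz 0 by [].
- have -> : (Posz n.+1 - 1 : int) = Posz n by rewrite -addn1 PoszD addrK.
  by rewrite /= fK.
- have -> : (Negz n - 1 : int) = Negz n.+1.
    rewrite !NegzE -opprD; congr (- _); apply/eqP; by rewrite -PoszD addn1.
  by [].
Qed.

Lemma iter_g_zit a b x : iter b g (iter a f x) = zit f g (Posz a - Posz b) x.
Proof.
elim: b => [|b IH]; first by rewrite subr0.
rewrite iterS IH zitP; congr zit.
by rewrite -addn1 PoszD opprD addrA.
Qed.

Lemma orbit_relP x y : orbit_rel f x y <-> exists m, y = zit f g m x.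
Proof.
split.
- move/asboolP => [a [b h]]; exists (Posz a - Posz b).
  by rewrite -iter_g_zit h iter_cK.
- move=> [[n|n] ->]; apply/asboolP.
  + by exists n, 0%N.
  + by exists 0%N, n.+1; change (x = iter n.+1 f (iter n.+1 g x)); rewrite (iter_cK _ gK).
Qed.

Lemma zitNK m x : zit f g (- m) (zit f g m x) = x.
Proof.
case: m => [[|n]|n] //=.
- by change (iter n.+1 g (iter n.+1 f x) = x); rewrite (iter_cK _ fK).
- by change (iter n.+1 f (iter n.+1 g x) = x); rewrite (iter_cK _ gK).
Qed.

Lemma zitKN m x : zit f g m (zit f g (- m) x) = x.
Proof. by rewrite -{1}(opprK m) zitNK. Qed.

Lemma zit_image m A : zit f g m @` A = zit f g (- m) @^-1` A.
Proof.
rewrite eqEsubset; split => x.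
- by move=> [a Aa <-] /=; rewrite zitNK.
- by move=> /= Ax; exists (zit f g (- m) x) => //; rewrite zitKN.
Qed.

Lemma iter_cont (h : T -> T) n : continuous h -> continuous (iter n h).
Proof.
move=> hc; elim: n => [|n IH]; first by move=> x; exact: cvg_id.
have -> : iter n.+1 h = h \o iter n h by [].
by move=> x; apply: continuous_comp; [exact: IH | exact: hc].
Qed.

Lemma zit_cont m : continuous f -> continuous g -> continuous (zit f g m).
Proof. by move=> fc gc; case: m => n /=; apply: iter_cont. Qed.
End Zit.
Section Circle.
Variable R : realType.
Local Notation S1 := (S1 R).

Lemma piS_surj (v : S1) : exists x : R, v = piS x.
Proof. by exists (repr v); rewrite /piS reprK. Qed.

Lemma S1_openE (A : set S1) : open A = open (piS @^-1` A).
Proof. by []. Qed.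

Lemma piS_open (A : set R) : open A -> open (piS @` A).
Proof.
move=> oA; rewrite S1_openE.
have -> : piS @^-1` (piS @` A) =
    \bigcup_(k in [set: int]) ((fun x : R => x - k%:~R) @^-1` A).
  rewrite eqEsubset; split => x /=.
  - move=> [a Aa /piSE /intrP [k hk]]; exists (- k) => //=.
    by rewrite mulrNz opprK -hk addrC subrK.
  - move=> [k _ /= Ak]; exists (x - k%:~R) => //; apply/piSE.
    by rewrite addrAC subrr add0r rpredN intr_int.
apply: bigcup_open => k _.
apply: open_comp => // x _.
by apply: cvgB; [exact: cvg_id | exact: cvg_cst].
Qed.

Lemma S1_compact : compact [set: S1].
Proof.
have -> : [set: S1] = piS @` `[0, 1].
  rewrite eqEsubset; split => // v _.
  have [x ->] := piS_surj v.
  exists (x - (Num.floor x)%:~R).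
    have /andP [h1 h2] := floor_itv x.
    rewrite /= in_itv /=; apply/andP; split; first by rewrite subr_ge0.
    by move: h2; rewrite intrD mulr1z => h2; lra.
  by apply/piSE; rewrite addrAC subrr add0r rpredN intr_int.
apply: continuous_compact; last exact: segment_compact.
apply: continuous_subspaceT; exact: pi_continuous.
Qed.

Lemma int_small (k : R) : k \is a Num.int -> `|k| < 1 -> k = 0.
Proof.
move=> /intrP [m ->]; rewrite -intr_norm -[1]/(1%:~R) ltr_int.
by move=> h; have -> : m = 0 by apply/eqP; rewrite -normr_le0 -ltzD1.
Qed.

Lemma arc_open (a b : R) : open (piS @` `]a, b[).
Proof. by apply: piS_open; exact: itv_open. Qed.

Lemma arc_sep (a b : R) (w0 w1 : S1) : a < b < a + 1 ->
  (piS @` `]a, b[) w0 -> (piS @` `]a, b[) w1 -> w0 <> w1 ->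
  exists O : set S1, [/\ open O, O `<=` piS @` `]a, b[, O w0 & ~ O w1].
Proof.
move=> /andP [ab bab] [s hs <-] [t ht <-] ne.
exists (piS @` (`]a, b[ `&` ~` [set t])); split.
- apply: piS_open; apply: openI; first exact: itv_open.
  by rewrite openC; apply: compact_closed; [exact: Rhausdorff | exact: compact_set1].
- by move=> _ [u [hu _] <-]; exists u.
- by exists s => //; split => // st; apply: ne; rewrite st.
- move=> [u [hu hut] /piSE hi]; apply: hut.
  have h0 : u - t = 0.
    apply: (int_small _ hi).
    move: hs ht hu; rewrite /= !in_itv /= => /andP [? ?] /andP [? ?] /andP [? ?].
    rewrite ltr_norml; apply/andP; split; lra.
  by apply/eqP; rewrite -subr_eq0 h0.
Qed.
End Circle.

Section OrbitLemmas.
Context {T : topologicalType} {f g : T -> T} (fK : cancel f g) (gK : cancel g f)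
  (fc : continuous f) (gc : continuous g).

Lemma pzit m x : orbit_proj f (zit f g m x) = orbit_proj f x.
Proof. by symmetry; apply/projE; apply/(orbit_relP fK gK); exists m. Qed.

Lemma pinv x y : orbit_proj f x = orbit_proj f y -> exists m, y = zit f g m x.
Proof. by move/projE/(orbit_relP fK gK). Qed.

Lemma sat_open (O : set T) : open O -> open (orbit_proj f @` O).
Proof.
move=> oO.
have -> : open (orbit_proj f @` O) = open (orbit_proj f @^-1` (orbit_proj f @` O)) by [].
have -> : orbit_proj f @^-1` (orbit_proj f @` O) =
    \bigcup_(m in [set: int]) (zit f g m @^-1` O).
  rewrite eqEsubset; split => x /=.
  - move=> [] o Oo /(pinv) [m ->]; exists (- m) => //=.
    by rewrite (zitNK fK gK).
  - move=> [m _ /= Om]; exists (zit f g m x) => //; exact: pzit.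
apply: bigcup_open => m _.
apply: open_comp => // x _.
exact: zit_cont.
Qed.
End OrbitLemmas.

Local Close Scope quotient_scope.

Theorem mainTheorem13 (R : realType) (f : S1 R -> S1 R) (Gamma J0 : set (S1 R)) :
  Denjoy f Gamma J0 ->
  let p := orbit_proj f in
  let Q := p @` Gamma in
  let J := p @` (~` Gamma) in
  [/\ (* (a) *)
      (forall U : set (S1 R), open U -> U `&` Gamma !=set0 -> p @^-1` (p @` U) = setT),
      (* (b) *)
      (forall V : set (orbit_space f), open V -> V `&` Q !=set0 -> V = setT),
      (* (c) *)
      (forall L : set (orbit_space f), L `&` Q !=set0 -> compact L) &
      (* (d) *)
      (forall (k : orbit_space f -> orbit_space f) (y : orbit_space f),
         continuous k -> Q y -> J (k y) -> forall z, k z = k y)].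
Proof.
move=> [g [[fc gc fK gK] _ [_ _ _ dense] [[a [b [hab hJ0]]] gaps disj]]] p Q J.
have J0open : open J0 by rewrite hJ0; exact: arc_open.
have popen : forall O, open O -> open (p @` O) by move=> O; exact: (sat_open fK gK fc gc).
have pz := pzit fK gK.
have Jopen : forall m, open (zit f g m @` J0).
  move=> m; rewrite (zit_image fK gK); apply: open_comp => // x _.
  exact: zit_cont.
have partA : forall U : set (S1 R), open U -> U `&` Gamma !=set0 ->
    p @^-1` (p @` U) = setT.
  move=> U oU [w [Uw Gw]].
  set P := p @^-1` (p @` U).
  have oP : open P := popen U oU.
  have GP : Gamma `<=` P.
    move=> z Gz.
    have := dense z Gz w Gw U (open_nbhs_nbhs (conj oU Uw)).
    move=> [_ [[k _ <-] Uk]].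
    by exists (zit f g k z) => //; exact: pz.
  have Psat : forall x y, p x = p y -> P x -> P y.
    by move=> x y e [u Uu e2]; exists u => //; rewrite e2 e.
  apply/seteqP; split => // z _.
  apply: contrapT => nPz.
  have cC : compact (~` P).
    apply: (subclosed_compact _ (S1_compact R)) => //.
    by rewrite closedC.
  have CJ : ~` P `<=` cover [set: int] (fun m => zit f g m @` J0).
    move=> x Cx; have nG : (~` Gamma) x by move=> /GP.
    by move: nG; rewrite gaps => -[m _ hm]; exists m.
  rewrite compact_cover in cC.
  have [D' _ hD'] := cC int [set: int] (fun m => zit f g m @` J0)
    (fun m _ => Jopen m) CJ.
  have nGz : (~` Gamma) z by move=> /GP.
  move: nGz; rewrite gaps => -[m0 _ [j J0j hz]].
  pose N := (\max_(d <- finmap.enum_fset D') `|d|%N).+1.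
  have Cj : (~` P) (zit f g (Posz N) j).
    move=> Pj; apply: nPz; apply: Psat Pj.
    by rewrite /p pz -hz pz.
  have [d hd hdx] := hD' _ Cj.
  have dN : (Posz N) != d.
    apply/eqP => e.
    have := @leq_bigmax_seq _ (finmap.enum_fset D') xpredT (fun d => `|d|%N) d hd isT.
    by rewrite -e /= ltnn.
  have := disj (Posz N) d dN; rewrite -subset0 => /(_ (zit f g (Posz N) j)) H.
  by apply: H; split => //; exists j.
have partB : forall V : set (orbit_space f), open V -> V `&` Q !=set0 -> V = setT.
  move=> V oV [y [Vy [x Gx ex]]].
  have hU : p @^-1` (p @` (p @^-1` V)) = setT.
    by apply: partA => //; exists x; split => //=; rewrite ex.
  apply/seteqP; split => // v _.
  have [u ->] : exists u, v = p u by exists (repr v); rewrite /p /orbit_proj reprK.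
  have : (p @^-1` (p @` (p @^-1` V))) u by rewrite hU.
  by move=> [] u' Vu' <-.
have partC : forall L : set (orbit_space f), L `&` Q !=set0 -> compact L.
  move=> L [y [Ly Qy]] F PF FL; exists y; split => //.
  move=> A B FA; rewrite nbhsE => -[V [oV Vy] VB].
  have VT := partB V oV (ex_intro _ y (conj Vy Qy)).
  have [x Ax] := filter_ex FA.
  by exists x; split => //; apply: VB; rewrite VT.
split => //.
move=> k y kc Qy [w nGw kyw].
have : (~` Gamma) w := nGw.
rewrite gaps => -[m _ [w0 J0w0 hw]].
have kyw0 : k y = p w0 by rewrite -kyw -hw /p pz.
have H : forall O, open O -> O w0 -> forall z, exists2 o, O o & p o = k z.
  move=> O oO Ow0 z.
  have oV : open (k @^-1` (p @` O)).
    by move/continuousP: kc; apply; exact: popen.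
  have VT := partB _ oV (ex_intro _ y (conj (ex_intro2 _ _ w0 Ow0 (esym kyw0)) Qy)).
  have : (k @^-1` (p @` O)) z by rewrite VT.
  by [].
move=> z; have [w1 J0w1 e1] := H J0 J0open J0w0 z.
have w10 : w1 = w0.
  apply: contrapT => ne.
  have J0w0' : (piS @` `]a, b[) w0 by rewrite -hJ0.
  have J0w1' : (piS @` `]a, b[) w1 by rewrite -hJ0.
  move: (@arc_sep R a b w0 w1 hab J0w0' J0w1' (nesym ne)) => -[W [oO OJ Ow0 nOw1]].
  have [q Oq eq0] := H W oO Ow0 z.
  have [n hn] := pinv fK gK _ _ (etrans e1 (esym eq0)).
  have Jo : J0 q by rewrite hJ0; exact: OJ.
  case: (eqVneq n 0) => [n0 | n0].
    by apply: nOw1; move: Oq; rewrite hn n0.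
  have := disj n 0 n0; rewrite -subset0 => /(_ q) H2.
  by apply: H2; split; [exists w1 | exists q].
by rewrite -e1 w10 kyw0.
Qed.
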